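(* For every prime power $q$, every integer $n\ge -1$ and every integer $k$ with $-1\le k\le\frac{n-1}{2}$, $$f(n,q)\le q^{2k+2}f(n-k-1,q)+f(k,q)+\Bigl(\sum_{i=0}^k q^i\Bigr)\Bigl(\sum_{j=k}^{n-2}q^j\Bigr).$$
   Context: $\mathrm{PG}(n,q)$ is the $n$-dimensional projective space over $\mathbb F_q$. A $(2,1)$-blocking set in $\mathrm{PG}(n,q)$ is a set of lines such that every plane contains at least one of them. For $n\ge -1$, $f(n,q)$ is the smallest possible size of a $(2,1)$-blocking set in $\mathrm{PG}(n,q)$; in particular $f(-1,q)=f(0,q)=f(1,q)=0$. Empty sums are $0$. *)

(* Defs.v *)
From HB Require Import structures.
From mathcomp Require Import all_boot all_order all_algebra.
Set Implicit Arguments. Unset Strict Implicit. Unset Printing Implicit Defensive.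
Import Order.TTheory GRing.Theory Num.Theory.

(* PG(n,q) is modelled by the vector space F^(n+1) = 'rV[F]_(n+1), F a finite
   field with q elements.  A projective subspace of projective dimension d-1
   is (the set of vectors of) a d-dimensional linear subspace. *)

Section PG.
Variable F : finFieldType.

Definition is_subspace_dim (m d : nat) (S : {set 'rV[F]_m}) : bool :=
  [exists A : 'M[F]_(d, m), (\rank A == d) && (S == [set v | (v <= A)%MS])].

Definition is_line (m : nat) (S : {set 'rV[F]_m}) := is_subspace_dim 2 S.
Definition is_plane (m : nat) (S : {set 'rV[F]_m}) := is_subspace_dim 3 S.

Definition blocking21 (m : nat) (B : {set {set 'rV[F]_m}}) : bool :=
  [forall L in B, is_line L] &&
  [forall P : {set 'rV[F]_m}, is_plane P ==> [exists L in B, L \subset P]].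

(* smallest size of a (2,1)-blocking set in PG(m-1, q) (vector dimension m).
   The set of all lines is always blocking, so the default is never the
   answer unless it is attained. *)
Definition f_vec (m : nat) : nat :=
  \big[minn/#|[set: {set 'rV[F]_m}]|]_(B : {set {set 'rV[F]_m}} | blocking21 B) #|B|.

Definition fPG (n : int) : nat := f_vec (absz (n + 1)%R).

End PG.

(* Main.v *)
Require Import Defs.
From HB Require Import structures.
From mathcomp Require Import all_boot all_order all_algebra.
From mathcomp Require Import zify.
Set Implicit Arguments. Unset Strict Implicit. Unset Printing Implicit Defensive.
Import Order.TTheory GRing.Theory Num.Theory.
Local Open Scope ring_scope.

Section Gen.
Variable F : finFieldType.

Definition span_set m r (A : 'M[F]_(r,m)) : {set 'rV[F]_m} := [set v | (v <= A)%MS].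

Lemma span_subset m r1 r2 (A : 'M[F]_(r1,m)) (B : 'M[F]_(r2,m)) :
  (A <= B)%MS -> span_set A \subset span_set B.
Proof.
move=> AB; apply/subsetP => v; rewrite !inE => vA; exact: submx_trans vA AB.
Qed.

Lemma subset_span m r1 r2 (A : 'M[F]_(r1,m)) (B : 'M[F]_(r2,m)) :
  span_set A \subset span_set B -> (A <= B)%MS.
Proof.
move=> /subsetP AB; apply/row_subP => i.
by have := AB (row i A); rewrite !inE; apply; apply: row_sub.
Qed.

Lemma sub_dimP m d (S : {set 'rV[F]_m}) :
  reflect (exists A : 'M[F]_(d,m), \rank A = d /\ S = span_set A)
          (is_subspace_dim d S).
Proof.
apply: (iffP existsP).
  by move=> [A /andP [/eqP rA /eqP SA]]; exists A.
by move=> [A [rA SA]]; exists A; rewrite rA SA !eqxx.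
Qed.

Definition bas m d (S : {set 'rV[F]_m}) : 'M[F]_(d,m) :=
  odflt 0 [pick A : 'M[F]_(d,m) | (\rank A == d) && (S == span_set A)].

Lemma basP m d (S : {set 'rV[F]_m}) : is_subspace_dim d S ->
  \rank (bas d S) = d /\ S = span_set (bas d S).
Proof.
move=> /existsP [A HA]; rewrite /bas; case: pickP => [B /andP [/eqP -> /eqP ->]|/(_ A)] //.
by rewrite /span_set HA.
Qed.

Lemma f_vec_le m (B : {set {set 'rV[F]_m}}) : blocking21 B -> (f_vec F m <= #|B|)%N.
Proof.
move=> bB; rewrite /f_vec -minEnat.
by rewrite -leEnat; apply: bigmin_le_cond.
Qed.

Lemma all_lines_blocking m : blocking21 [set L : {set 'rV[F]_m} | is_line L].
Proof.
apply/andP; split; first by apply/forallP => L; apply/implyP; rewrite inE.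
apply/forallP => P; apply/implyP => /sub_dimP [A [rA ->]].
have frA : row_free A by rewrite /row_free rA.
apply/existsP; exists (span_set ((pid_mx 2 : 'M[F]_(2,3)) *m A)).
rewrite inE; apply/andP; split.
  apply/sub_dimP; exists ((pid_mx 2 : 'M[F]_(2,3)) *m A); split => //.
  by rewrite mxrankMfree // rank_pid_mx.
by apply: span_subset; apply: submxMl.
Qed.

Lemma f_vec_attained m : exists B : {set {set 'rV[F]_m}}, blocking21 B /\ f_vec F m = #|B|.
Proof.
rewrite /f_vec -minEnat.
have H : forall B : {set {set 'rV[F]_m}}, blocking21 B -> (#|B| <= #|[set: {set 'rV[F]_m}]|)%O.
  by move=> B _; rewrite leEnat cardsT; apply: max_card.
have [B0 HB0 E] := @eq_bigmin _ _ _ _ _ (@blocking21 F m) _ (all_lines_blocking m) H.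
by exists B0.
Qed.

End Gen.
Lemma card_imset_fiber (T U : finType) (f : T -> U) (A : {set T}) c :
  (forall t, t \in A -> c <= #|[set t' in A | f t' == f t]|)%N ->
  (#|f @: A| * c <= #|A|)%N.
Proof.
move=> H.
have -> : #|A| = (\sum_(t in A) 1)%N by rewrite sum1_card.
rewrite (partition_big_imset f) /= -sum_nat_const.
apply: leq_sum => u /imsetP [t tA ->].
apply: (leq_trans (H t tA)).
rewrite -sum1_card; apply: eq_leq; apply: eq_bigl => x; rewrite inE.
by [].
Qed.

Section Ker.
Variable F : finFieldType.

Lemma card_ker_col b (c : 'cV[F]_b) : c != 0 ->
  (#|[set y : 'rV[F]_b | (y *m c) ord0 ord0 == 0%R]| * #|F| = #|F| ^ b)%N.
Proof.
move=> cn0.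
have [j cj] : exists j, c j ord0 != 0.
  apply/existsP; move: cn0; apply: contraR; rewrite negb_exists => /forallP H.
  by apply/eqP/matrixP => i k; rewrite ord1 mxE; apply/eqP; have := H i; rewrite negbK.
set g := fun y : 'rV[F]_b => (y *m c) ord0 ord0.
have gD : forall y z, g (y + z) = g y + g z by move=> y z; rewrite /g mulmxDl mxE.
have gZ : forall s, g ((s / c j ord0) *: delta_mx ord0 j) = s.
  move=> s; rewrite /g -scalemxAl mxE -rowE mxE mulrVK ?unitfE //.
have fib : forall s0, #|[set y | g y == s0]| = #|[set y : 'rV[F]_b | g y == 0%R]|.
  move=> s0; pose ys : 'rV[F]_b := (s0 / c j ord0) *: delta_mx ord0 j; have gys : g ys = s0 := gZ s0.
  have -> : [set y | g y == s0] = [set y + ys | y in [set y | g y == 0%R]].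
    apply/setP => y; rewrite inE; apply/eqP/imsetP.
      move=> gy; exists (y - ys); last by rewrite subrK.
      by rewrite inE; apply/eqP; apply: (@addIr _ (g ys)); rewrite -gD subrK add0r gys gy.
    by move=> [z]; rewrite inE => /eqP gz ->; rewrite gD gz gys add0r.
  by rewrite card_imset //; apply: addIr.
have -> : (#|F| ^ b = \sum_(s : F) #|[set y : 'rV[F]_b | g y == s]|)%N.
  have := card_mx F 1 b; rewrite mul1n => <-.
  rewrite -sum1_card (partition_big g xpredT) //=.
  apply: eq_bigr => s _; rewrite -sum1_card; apply: eq_bigl => y; by rewrite inE.
rewrite (eq_bigr _ (fun s _ => fib s)) sum_nat_const mulnC.
by [].
Qed.
End Ker.

Lemma nat_geom q n : (0 < q)%N -> (q ^ n - 1 = (q - 1) * \sum_(i < n) q ^ i)%N.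
Proof.
move=> q0; elim: n => [|n IH]; first by rewrite big_ord0 muln0.
rewrite big_ord_recr /= mulnDr -IH expnS.
have : (0 < q ^ n)%N by rewrite expn_gt0 q0.
move: (q ^ n)%N => X X0; rewrite mulnBl mul1n.
have : (X <= q * X)%N by rewrite leq_pmull.
lia.
Qed.

Section Constr.
Variables (F : finFieldType) (a b : nat).
Hypothesis hab : (a <= b)%N.

Definition Phi : 'M[F]_(a,b) := \matrix_(i,j) ((i : nat) == j)%:R.

Lemma Phi_inj (p : 'rV[F]_a) : p *m Phi = 0 -> p = 0.
Proof.
move=> H; apply/rowP => i.
have := congr1 (fun M : 'rV[F]_b => M ord0 (widen_ord hab i)) H.
rewrite !mxE (bigD1 i) //= mxE eqxx mulr1 big1 ?addr0 //.
by move=> j ji; rewrite mxE /=; have /negbTE -> : (j : nat) != i by []; rewrite mulr0.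
Qed.

Definition Kmat : 'M[F]_(a, a+b) := row_mx 1%:M 0.

Lemma subK r (M : 'M[F]_(r, a+b)) : (M <= Kmat)%MS = (rsubmx M == 0).
Proof.
apply/idP/idP.
  by move=> /submxP [D ->]; rewrite -mulmx_rsub row_mxKr mulmx0.
move=> /eqP M0; rewrite -[M]hsubmxK M0.
have -> : row_mx (lsubmx M) (0 : 'M_(r,b)) = lsubmx M *m Kmat.
  by rewrite mul_mx_row mulmx1 mulmx0.
exact: submxMl.
Qed.

Lemma mul2 n (z : 'M[F]_(1, 1 + 1)) (U W : 'rV[F]_n) :
  z *m col_mx U W = (lsubmx z) ord0 ord0 *: U + (rsubmx z) ord0 ord0 *: W.
Proof.
set zl := lsubmx z; set zr := rsubmx z.
rewrite -[z]hsubmxK -/zl -/zr mul_row_col {1}[zl]mx11_scalar {1}[zr]mx11_scalar.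
by rewrite !mul_scalar_mx.
Qed.

Lemma rank2 n (U W : 'rV[F]_n) :
  (forall k l : F, k *: U + l *: W = 0 -> k = 0 /\ l = 0) ->
  \rank (col_mx U W) = 2.
Proof.
move=> H; apply/eqP; rewrite -/(row_free (col_mx U W)) -kermx_eq0.
apply/negPn/negP => /rowV0Pn [z /sub_kermxP zK zn0].
have := mul2 (z : 'M_(1, 1 + 1)) U W; rewrite zK => /esym /H [l0 r0].
move/eqP: zn0; apply.
have zl0 : lsubmx (z : 'M_(1, 1+1)) = 0 by apply/matrixP => i j; rewrite !ord1 l0 mxE.
have zr0 : rsubmx (z : 'M_(1, 1+1)) = 0 by apply/matrixP => i j; rewrite !ord1 r0 mxE.
by rewrite -[z : 'M_(1, 1+1)]hsubmxK zl0 zr0 row_mx0.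
Qed.

Lemma rank_cap_ker r n (S : 'M[F]_(r,n)) (c : 'cV[F]_n) :
  (\rank S <= \rank (S :&: kermx c)%MS + 1)%N.
Proof.
have := mxrank_sum_cap S (kermx c); rewrite mxrank_ker.
have := rank_leq_col (S + kermx c)%MS; have := rank_leq_col c; have := rank_leq_row c.
lia.
Qed.


Lemma span_eq m r1 r2 (A : 'M[F]_(r1,m)) (B : 'M[F]_(r2,m)) :
  (A <= B)%MS -> (B <= A)%MS -> span_set A = span_set B.
Proof.
move=> AB BA; apply/setP => v; rewrite !inE; apply/idP/idP => H.
  exact: submx_trans H AB.
exact: submx_trans H BA.
Qed.

Definition emb (p : 'rV[F]_a) : 'rV[F]_(a+b) := row_mx p 0.
Definition condT (p : 'rV[F]_a) (y : 'rV[F]_b) : bool :=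
  (y *m (p *m Phi)^T) ord0 ord0 == 0.
Definition Tset : {set ('rV[F]_a * 'rV[F]_a) * 'rV[F]_b} :=
  [set t | [&& t.1.1 != 0, t.2 != 0 & condT t.1.1 t.2]].
Definition linM (t : ('rV[F]_a * 'rV[F]_a) * 'rV[F]_b) :=
  col_mx (emb t.1.1) (row_mx t.1.2 t.2).
Definition linT t := span_set (linM t).
Definition B3 := linT @: Tset.

Lemma linM_rank t : t \in Tset -> \rank (linM t) = 2.
Proof.
case: t => [[p x] y]; rewrite inE /= => /and3P [pn0 yn0 _].
apply: rank2 => k l; rewrite /emb !scale_row_mx add_row_mx -row_mx0.
move=> /eq_row_mx [E1 E2].
have l0 : l = 0.
  by move/eqP: E2; rewrite scaler0 add0r scaler_eq0 (negbTE yn0) orbF => /eqP.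
move: E1; rewrite l0 scale0r addr0 => /eqP; rewrite scaler_eq0 (negbTE pn0) orbF.
by move/eqP.
Qed.

Lemma linT_line t : t \in Tset -> is_line (linT t).
Proof.
by move=> tT; apply/sub_dimP; exists (linM t); split => //; apply: linM_rank.
Qed.

Lemma scal_inj n (v : 'rV[F]_n) (k l : F) : v != 0 -> k *: v = l *: v -> k = l.
Proof.
move=> vn0 /eqP; rewrite -subr_eq0 -scalerBl scaler_eq0 (negbTE vn0) orbF subr_eq0.
by move/eqP.
Qed.

Definition gmap (t : ('rV[F]_a * 'rV[F]_a) * 'rV[F]_b) (w : (F * F) * F) :
  ('rV[F]_a * 'rV[F]_a) * 'rV[F]_b :=
  ((w.1.1 *: t.1.1, w.1.2 *: t.1.2 + w.2 *: t.1.1), w.1.2 *: t.2).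

Lemma fiber t : t \in Tset ->
  ((#|F| - 1) * (#|F| - 1) * #|F| <= #|[set t' in Tset | linT t' == linT t]|)%N.
Proof.
move=> tT; have := tT; case: t tT => [[p x] y] tT; rewrite inE /= => /and3P [pn0 yn0 cT].
set D := [set w : (F * F) * F | (w.1.1 != 0) && (w.1.2 != 0)].
have cD : #|D| = ((#|F| - 1) * (#|F| - 1) * #|F|)%N.
  have -> : D = setX (setX [set~ (0 : F)] [set~ (0 : F)]) [set: F].
    by apply/setP => w; rewrite /D !inE andbT.
  by rewrite !cardsX !cardsC1 cardsT subn1.
rewrite -cD -(card_in_imset (f := gmap ((p, x), y))); last first.
  move=> [[k l] n] [[k' l'] n']; rewrite !inE /= => /andP [kn0 ln0] /andP [k'n0 l'n0].
  case=> E1 E2 E3.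
  have kk := scal_inj pn0 E1; have ll := scal_inj yn0 E3.
  subst k' l'; move/addrI: E2 => /(scal_inj pn0) nn.
  by rewrite nn.
apply: subset_leq_card; apply/subsetP => t' /imsetP [[[k l] n]].
rewrite inE /= => /andP [kn0 ln0] ->.
have gT : gmap ((p, x), y) (k, l, n) \in Tset.
  rewrite inE /= !scaler_eq0 (negbTE kn0) (negbTE ln0) (negbTE pn0) (negbTE yn0) /=.
  have trZ : forall (c : F) (M : 'rV[F]_b), (c *: M)^T = c *: M^T.
    by move=> c M; apply/matrixP => i j; rewrite !mxE.
  move: cT; rewrite /condT -!scalemxAl trZ -scalemxAr !mxE.
  by move/eqP => ->; rewrite !mulr0.
have := submx_refl (linM ((p, x), y)); rewrite {2}/linM col_mx_sub => /andP [s1 s2].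
have sub : (linM (gmap ((p, x), y) (k, l, n)) <= linM ((p, x), y))%MS.
  rewrite {1}/linM /= col_mx_sub; apply/andP; split.
    have -> : emb (k *: p) = k *: emb p by rewrite /emb scale_row_mx scaler0.
    exact: scalemx_sub.
  have -> : row_mx (l *: x + n *: p) (l *: y) = l *: row_mx x y + n *: emb p.
    by rewrite /emb !scale_row_mx add_row_mx scaler0 addr0.
  by apply: addmx_sub; apply: scalemx_sub.
rewrite inE gT /=; apply/eqP; apply: (span_eq sub).
case: (mxrank_leqif_sup sub) => _ <-.
by rewrite (linM_rank gT) (linM_rank tT).
Qed.


Lemma cardY p : p != 0 ->
  (#|[set y : 'rV[F]_b | (y != 0%R) && condT p y]| * #|F| = #|F| ^ b - #|F|)%N.
Proof.
move=> pn0.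
have cn0 : (p *m Phi)^T != 0.
  by rewrite trmx_eq0; apply/eqP => /Phi_inj /eqP; rewrite (negbTE pn0).
have := card_ker_col cn0.
rewrite (cardsD1 0%R) inE mul0mx mxE eqxx /= add1n.
have -> : [set y : 'rV[F]_b | (y *m (p *m Phi)^T) ord0 ord0 == 0%R] :\ 0%R =
          [set y : 'rV[F]_b | (y != 0%R) && condT p y].
  by apply/setP => y; rewrite !inE.
move=> <-; by rewrite mulSn addnC addnK.
Qed.

Lemma card_T : (#|Tset| * #|F| = (#|F| ^ a - 1) * #|F| ^ a * (#|F| ^ b - #|F|))%N.
Proof.
have E : #|Tset| = (\sum_(p : 'rV[F]_a) \sum_(x : 'rV[F]_a) \sum_(y : 'rV[F]_b)
            ((p != 0%R) && ((y != 0%R) && condT p y) : nat))%N.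
  rewrite pair_bigA pair_bigA /= -sum1_card big_mkcond /=; apply: eq_bigr => t _.
  by rewrite inE.
rewrite E big_distrl /=.
have -> : (\sum_(p : 'rV[F]_a) (\sum_(x : 'rV[F]_a) \sum_(y : 'rV[F]_b)
            ((p != 0%R) && ((y != 0%R) && condT p y) : nat)) * #|F| =
          \sum_(p : 'rV[F]_a) ((p != 0%R) * (#|F| ^ a * (#|F| ^ b - #|F|))))%N.
  apply: eq_bigr => p _; case: (eqVneq p 0%R) => [->|pn0] /=.
    by rewrite big1 // => x _; rewrite big1.
  rewrite big_distrl /= (eq_bigr (fun _ => #|F| ^ b - #|F|))%N.
    by rewrite sum_nat_const card_mx mul1n mul1n.
  move=> x _; rewrite -(cardY pn0) -sum1_card; congr (_ * _)%N.
  by rewrite [RHS]big_mkcond /=; apply: eq_bigr => y _; rewrite inE.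
rewrite -big_distrl /= mulnA; congr (_ * _ * _)%N.
have -> : (#|F| ^ a = #|{: 'rV[F]_a}|)%N by rewrite card_mx mul1n.
rewrite -cardsT (cardsD1 0%R) inE add1n subn1 /=.
rewrite -sum1_card [RHS]big_mkcond /=; apply: eq_bigr => p _.
by rewrite !inE andbT.
Qed.


Lemma blockP m (B : {set {set 'rV[F]_m}}) : blocking21 B ->
  (forall L, L \in B -> is_line L) /\
  (forall P, is_plane P -> exists2 L, L \in B & L \subset P).
Proof.
move=> /andP [/forallP H1 /forallP H2]; split.
  by move=> L LB; have := H1 L; rewrite LB.
move=> P PP; have := H2 P; rewrite PP /= => /existsP [L /andP [LB LP]].
by exists L.
Qed.

Definition h1 (x : {set 'rV[F]_b} * 'M[F]_(2,a)) : {set 'rV[F]_(a+b)} :=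
  span_set (row_mx x.2 (bas 2 x.1)).
Definition B1 (BW : {set {set 'rV[F]_b}}) := h1 @: setX BW [set: 'M[F]_(2,a)].
Definition h2 (l : {set 'rV[F]_a}) : {set 'rV[F]_(a+b)} :=
  span_set (row_mx (bas 2 l) (0 : 'M[F]_(2,b))).
Definition B2 (BK : {set {set 'rV[F]_a}}) := h2 @: BK.
Definition Bconstr BK BW := B1 BW :|: B2 BK :|: B3.

Lemma block_plane BK BW (A : 'M[F]_(3, a+b)) :
  blocking21 BK -> blocking21 BW -> \rank A = 3 ->
  exists2 L, L \in Bconstr BK BW & L \subset span_set A.
Proof.
move=> /blockP [linK pK] /blockP [linW pW] rA.
have frA : row_free A by rewrite /row_free rA.
set C := (A :&: Kmat)%MS.
have CA : (C <= A)%MS := capmxSl _ _.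
have CK : (C <= Kmat)%MS := capmxSr _ _.
have rC3 : (\rank C <= 3)%N by rewrite -[X in (_ <= X)%N]rA; apply: mxrankS.
case rC : (\rank C) => [|[|[|r]]].
-
  have C0 : C = 0 by apply/eqP; rewrite -mxrank_eq0 rC.
  set R := rsubmx A.
  have rR : \rank R = 3.
    apply/eqP; rewrite -/(row_free R) -kermx_eq0.
    apply/negPn/negP => /rowV0Pn [z /sub_kermxP zR zn0].
    have : (z *m A <= C)%MS.
      by rewrite sub_capmx submxMl /= subK -mulmx_rsub zR eqxx.
    rewrite C0 => /submx0null u0.
    by move/eqP: zn0; apply; apply: (row_free_inj frA); rewrite u0 mul0mx.
  have [l lW lsub] : exists2 l, l \in BW & l \subset span_set R.
    by apply: pW; apply/sub_dimP; exists R.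
  have [rl El] := basP (linW l lW).
  set Bl := bas 2 l.
  have BlR : (Bl <= R)%MS by apply: subset_span; rewrite -El.
  set Z := Bl *m pinvmx R.
  have BZ : Z *m R = Bl := mulmxKpV BlR.
  exists (h1 (l, Z *m lsubmx A)).
    rewrite !inE; apply/orP; left; apply/orP; left; apply/imsetP.
    by exists (l, Z *m lsubmx A) => //; rewrite !inE lW.
  rewrite /h1 /= -/Bl; apply: span_subset.
  by rewrite -BZ -mul_mx_row hsubmxK; apply: submxMl.
-
  have Cn0 : C != 0 by rewrite -mxrank_eq0 rC.
  have [u uC un0] := rowV0Pn Cn0.
  have uK : rsubmx u = 0 by apply/eqP; rewrite -subK (submx_trans uC CK).
  set p := lsubmx u.
  have up : u = emb p by rewrite /emb -uK hsubmxK.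
  have pn0 : p != 0 by apply: contraNneq un0 => p0; rewrite up p0 /emb row_mx0.
  set c := col_mx (0 : 'M[F]_(a,1)) ((p *m Phi)^T).
  set E := (A :&: kermx c)%MS.
  have rE : (2 <= \rank E)%N by move: (rank_cap_ker A c); rewrite rA addn1 ltnS; apply.
  have EnK : ~~ (E <= Kmat)%MS.
    apply/negP => EK; have : (E <= C)%MS by rewrite sub_capmx capmxSl EK.
    by move/mxrankS; rewrite rC => /(leq_trans rE).
  have [i vnK] := row_subPn EnK.
  set v := row i E.
  have vA : (v <= A)%MS by apply: submx_trans (row_sub i E) (capmxSl _ _).
  have vc : v *m c = 0 by apply/sub_kermxP; apply: submx_trans (row_sub i E) (capmxSr _ _).
  have yn0 : rsubmx v != 0 by rewrite -subK.
  have cond : condT p (rsubmx v).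
    rewrite /condT; have := vc; rewrite -{1}[v]hsubmxK mul_row_col mulmx0 add0r => ->.
    by rewrite mxE.
  exists (linT ((p, lsubmx v), rsubmx v)).
    rewrite !inE; apply/orP; right; apply/imsetP; exists ((p, lsubmx v), rsubmx v) => //.
    by rewrite inE /= pn0 yn0 cond.
  rewrite /linT /linM /= hsubmxK -up; apply: span_subset.
  by rewrite col_mx_sub (submx_trans uC CA) vA.
-
  have AnK : ~~ (A <= Kmat)%MS.
    apply/negP => AK; have : (A <= C)%MS by rewrite sub_capmx submx_refl AK.
    by move/mxrankS; rewrite rA rC.
  have [i vnK] := row_subPn AnK.
  set v := row i A.
  have vA : (v <= A)%MS := row_sub i A.
  set y := rsubmx v.
  have yn0 : y != 0 by rewrite -subK.
  set c := col_mx (Phi *m y^T) (0 : 'M[F]_(b,1)).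
  set E := (C :&: kermx c)%MS.
  have rE : (1 <= \rank E)%N by move: (rank_cap_ker C c); rewrite rC addn1 ltnS; apply.
  have En0 : E != 0 by rewrite -mxrank_eq0 -lt0n.
  have [u uE un0] := rowV0Pn En0.
  have uC : (u <= C)%MS := submx_trans uE (capmxSl _ _).
  have uc : u *m c = 0 by apply/sub_kermxP; exact: submx_trans uE (capmxSr _ _).
  have uK : rsubmx u = 0 by apply/eqP; rewrite -subK (submx_trans uC CK).
  set p := lsubmx u.
  have up : u = emb p by rewrite /emb -uK hsubmxK.
  have pn0 : p != 0 by apply: contraNneq un0 => p0; rewrite up p0 /emb row_mx0.
  have cond : condT p y.
    have H : p *m (Phi *m y^T) = 0.
      by have := uc; rewrite up /emb mul_row_col mul0mx addr0.
    rewrite /condT.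
    have -> : y *m (p *m Phi)^T = (p *m Phi *m y^T)^T by rewrite [RHS]trmx_mul trmxK.
    by rewrite -mulmxA H trmx0 mxE.
  exists (linT ((p, lsubmx v), y)).
    rewrite !inE; apply/orP; right; apply/imsetP; exists ((p, lsubmx v), y) => //.
    by rewrite inE /= pn0 yn0 cond.
  rewrite /linT /linM /= /y hsubmxK -up; apply: span_subset.
  by rewrite col_mx_sub (submx_trans uC CA) vA.
-
  have AC : (A <= C)%MS.
    case: (mxrank_leqif_sup CA) => _ <-; rewrite rC rA.
    by move: rC3; rewrite rC; case: (r) => [|r'] //.
  have RA0 : rsubmx A = 0 by apply/eqP; rewrite -subK (submx_trans AC CK).
  have rL : \rank (lsubmx A) = 3.
    have : \rank (row_mx (lsubmx A) (rsubmx A)) = 3 by rewrite hsubmxK.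
    by rewrite RA0 rank_row_mx0.
  have [l lK lsub] : exists2 l, l \in BK & l \subset span_set (lsubmx A).
    by apply: pK; apply/sub_dimP; exists (lsubmx A).
  have [rl El] := basP (linK l lK).
  set Bl := bas 2 l.
  have BlR : (Bl <= lsubmx A)%MS by apply: subset_span; rewrite -El.
  set Z := Bl *m pinvmx (lsubmx A).
  have BZ : Z *m lsubmx A = Bl := mulmxKpV BlR.
  exists (h2 l).
    rewrite !inE; apply/orP; left; apply/orP; right; apply/imsetP.
    by exists l.
  rewrite /h2 -/Bl; apply: span_subset.
  have -> : (0 : 'M[F]_(2,b)) = Z *m rsubmx A by rewrite RA0 mulmx0.
  by rewrite -BZ -mul_mx_row hsubmxK; apply: submxMl.
Qed.


Lemma blocking_constr BK BW : blocking21 BK -> blocking21 BW ->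
  blocking21 (Bconstr BK BW).
Proof.
move=> bK bW; have [linK _] := blockP bK; have [linW _] := blockP bW.
apply/andP; split.
  apply/forallP => L; apply/implyP; rewrite !inE => /orP [/orP [] |].
  - move=> /imsetP [[l G]]; rewrite !inE /= andbT => lW ->.
    have [rl El] := basP (linW l lW).
    apply/sub_dimP; exists (row_mx G (bas 2 l)); split => //.
    apply/eqP; rewrite eqn_leq rank_leq_row /=.
    apply: leq_trans (mxrankM_maxl _ (col_mx (0 : 'M[F]_(a,b)) 1%:M)).
    by rewrite mul_row_col mulmx0 mulmx1 add0r rl.
  - move=> /imsetP [l lK ->].
    have [rl El] := basP (linK l lK).
    by apply/sub_dimP; exists (row_mx (bas 2 l) 0); split => //; rewrite rank_row_mx0.
  - by move=> /imsetP [t tT ->]; apply: linT_line.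
apply/forallP => P; apply/implyP => /sub_dimP [A [rA ->]].
have [L LB LP] := block_plane bK bW rA.
by apply/existsP; exists L; rewrite LB LP.
Qed.

Lemma card_B3 : (#|B3| * ((#|F| - 1) * (#|F| - 1) * #|F|) <= #|Tset|)%N.
Proof. by apply: card_imset_fiber => t tT; apply: fiber. Qed.

Lemma card_constr BK BW :
  (#|Bconstr BK BW| <= #|BW| * #|F| ^ (2 * a) + #|BK| + #|B3|)%N.
Proof.
rewrite /Bconstr; apply: leq_trans (leq_card_setU _ _) _; rewrite leq_add2r.
apply: leq_trans (leq_card_setU _ _) _; apply: leq_add.
  apply: leq_trans (leq_imset_card _ _) _.
  by rewrite cardsX cardsT card_mx.
exact: leq_imset_card.
Qed.

Lemma main_nat : (f_vec F (a + b) <=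
  #|F| ^ (2 * a) * f_vec F b + f_vec F a + #|B3|)%N.
Proof.
have [BK [bK EK]] := f_vec_attained F a.
have [BW [bW EW]] := f_vec_attained F b.
apply: leq_trans (f_vec_le (blocking_constr bK bW)) _.
by rewrite EK EW mulnC; apply: card_constr.
Qed.


Lemma B3_bound : (#|B3| <= (\sum_(i < a) #|F| ^ i) * #|F| ^ a.-1 * (\sum_(i < b.-1) #|F| ^ i))%N.
Proof.
have q1 : (1 < #|F|)%N by apply: (leq_trans _ (max_card [set 0; 1])); rewrite cards2 eq_sym oner_neq0.
have H := leq_trans (leq_mul card_B3 (leqnn #|F|)) (eq_leq card_T).
move: H; move: #|B3| => N H.
case: a hab H => [|a'] hab' H.
  move: H; rewrite expn0 subnn !mul0n leqn0 big_ord0 !mul0n leqn0.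
  have pos : (0 < (#|F| - 1) * (#|F| - 1) * #|F| * #|F|)%N.
    by rewrite !muln_gt0 subn_gt0 q1 (ltnW q1).
  move=> /eqP H0.
  have : (N * ((#|F| - 1) * (#|F| - 1) * #|F| * #|F|) == 0)%N by apply/eqP; rewrite !mulnA; rewrite !mulnA in H0; exact: H0.
  by rewrite muln_eq0 (negbTE (lt0n_neq0 pos)) orbF.
case: b hab' H => [//|b'] _ H.
have E1 : (#|F| ^ b'.+1 - #|F| = #|F| * (#|F| ^ b' - 1))%N by rewrite mulnBr muln1 expnS.
rewrite E1 !(nat_geom _ (ltnW q1)) in H.
rewrite /= -(@leq_pmul2r ((#|F| - 1) * (#|F| - 1) * #|F| * #|F|)); last first.
  by rewrite !muln_gt0 subn_gt0 q1 (ltnW q1).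
move: H; rewrite expnS.
set S1 := (\sum_(i < a'.+1) _)%N; set S2 := (\sum_(i < b') _)%N.
set Q := #|F|; set X := (Q ^ a')%N; set d := (Q - 1)%N.
move=> H.
nia.
Qed.

End Constr.

Lemma final_nat (F : finFieldType) a b : (a <= b)%N ->
  (f_vec F (a + b) <= #|F| ^ (2 * a) * f_vec F b + f_vec F a
     + (\sum_(i < a) #|F| ^ i) * #|F| ^ a.-1 * (\sum_(i < b.-1) #|F| ^ i))%N.
Proof.
move=> hab; apply: leq_trans (@main_nat F a b hab) _; rewrite leq_add2l.
exact: (@B3_bound F a b hab).
Qed.

Theorem proposition3p32 (F : finFieldType) (n k : int) :
  -1 <= n -> -1 <= k -> 2 * k <= n - 1 ->
  let q : rat := (#|F|%:R)%R in
  ((fPG F n)%:R : rat) <=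
    q ^ (2 * k + 2) * (fPG F (n - k - 1))%:R + (fPG F k)%:R
    + (\sum_(i < absz (k + 1)%R) q ^+ i)
      * (\sum_(t < absz (Num.max 0 (n - 1 - k))%R) q ^ (k + t%:Z)).
Proof.
move=> hn hk h2k; cbv zeta.
have hab : (absz (k + 1)%R <= absz (n - k)%R)%N by lia.
have Hn : fPG F n = f_vec F (absz (k + 1)%R + absz (n - k)%R) by rewrite /fPG; congr f_vec; lia.
have Hm : fPG F (n - k - 1) = f_vec F (absz (n - k)%R) by rewrite /fPG; congr f_vec; lia.
have Hexp : 2 * k + 2 = Posz (muln 2 (absz (k + 1)%R)) by lia.
have Hmax : absz (Num.max 0 (n - 1 - k)) = (absz (n - k)).-1 by lia.
have Hs : (\sum_(i < absz (k + 1)%R) (#|F|%:R : rat) ^+ i) *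
          (\sum_(t < (absz (n - k)).-1) (#|F|%:R : rat) ^ (k + t%:Z)) =
    (((\sum_(i < absz (k + 1)%R) #|F| ^ i) * #|F| ^ (absz (k + 1)%R).-1
      * (\sum_(i < (absz (n - k)).-1) #|F| ^ i))%N)%:R.
  case ha : (absz (k + 1)%R) => [|a'].
    by rewrite !big_ord0 !mul0r mul0n.
  have Ht : forall t : nat, k + t%:Z = Posz (a' + t)%N by move=> t; lia.
  rewrite !natrM !natr_sum -mulrA; congr (_ * _).
    by apply: eq_bigr => i _; rewrite natrX.
  rewrite big_distrr /=; apply: eq_bigr => t _; rewrite Ht -exprnP exprD !natrX.
  by [].
rewrite Hn Hm Hexp Hmax Hs /fPG -exprnP.
have := final_nat F hab; rewrite -(ler_nat rat) => H; apply: le_trans H _.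
by rewrite !natrD !natrM !natrX.
Qed.
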